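(* Let $\mu\in[0,1]$, $A\in\mathbb R^{q\times n}$ of full row rank, $b\in\mathbb R^q$, $\gamma>0$, $\delta\in(0,\|b\|_{LL_2,\gamma})$, $g(x):=\|Ax-b\|_{LL_2,\gamma}-\delta$ and $F(x):=\|x\|_1-\mu\|x\|+\delta_{\{g\le0\}}(x)$. Then: (i) MFCQ holds at every feasible point, i.e., for every $x$ with $g(x)\le0$ and $g(x)=0$ one has $\nabla g(x)\neq0$; (ii) if $\mu\in[0,1)$, $F$ is level-bounded; (iii) if $\mu=1$ and $A$ has no zero columns, $F$ is level-bounded.
   Context: For $y\in\mathbb R^q$, the Lorentzian norm is $\|y\|_{LL_2,\gamma}:=\sum_{i=1}^q\log\big(1+y_i^2/\gamma^2\big)$. $\|\cdot\|_1$ is the $\ell_1$ norm and $\|\cdot\|$ the Euclidean norm; $\delta_C$ is the indicator function of $C$. For a single smooth constraint $g\le0$, MFCQ at a feasible $x$ means: if $g(x)=0$ there exists $d$ with $\langle\nabla g(x),d\rangle<0$, equivalently $\nabla g(x)\ne0$. A function is level-bounded if all its sublevel sets are bounded. *)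

(* Defs.v *)
From Stdlib Require Import Reals Lra Lia.
Open Scope R_scope.

(* Vectors in R^n are functions nat -> R (only indices < n matter);
   matrices in R^{q x n} are functions nat -> nat -> R (entry (i,j)). *)

Fixpoint rsum (f : nat -> R) (n : nat) : R :=
  match n with
  | O => 0
  | S k => rsum f k + f k
  end.

Definition matvec (n : nat) (A : nat -> nat -> R) (x : nat -> R) : nat -> R :=
  fun i => rsum (fun j => A i j * x j) n.

Definition lorentz (q : nat) (gamma : R) (y : nat -> R) : R :=
  rsum (fun i => ln (1 + (y i)^2 / gamma^2)) q.

Definition norm1 (n : nat) (x : nat -> R) : R := rsum (fun j => Rabs (x j)) n.
Definition norm2 (n : nat) (x : nat -> R) : R := sqrt (rsum (fun j => (x j)^2) n).

Definition full_row_rank (q n : nat) (A : nat -> nat -> R) : Prop :=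
  forall y : nat -> R,
    (forall j, (j < n)%nat -> rsum (fun i => y i * A i j) q = 0) ->
    forall i, (i < q)%nat -> y i = 0.

Definition gfun (q n : nat) (A : nat -> nat -> R) (b : nat -> R) (gamma delta : R)
  (x : nat -> R) : R :=
  lorentz q gamma (fun i => matvec n A x i - b i) - delta.

Definition shift (x : nat -> R) (j : nat) (t : R) : nat -> R :=
  fun k => if Nat.eqb k j then x k + t else x k.

Definition is_gradient (n : nat) (f : (nat -> R) -> R) (x grad : nat -> R) : Prop :=
  forall j, (j < n)%nat -> derivable_pt_lim (fun t => f (shift x j t)) 0 (grad j).

(* F(x) <= alpha, where F(x) = ||x||_1 - mu ||x|| + indicator_{g <= 0}(x)
   (the indicator is +infinity outside {g <= 0}, so F(x) <= alpha iff
   g(x) <= 0 and ||x||_1 - mu ||x|| <= alpha). *)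
Definition F_le (q n : nat) (A : nat -> nat -> R) (b : nat -> R) (gamma delta mu : R)
  (x : nat -> R) (alpha : R) : Prop :=
  gfun q n A b gamma delta x <= 0 /\ norm1 n x - mu * norm2 n x <= alpha.

Definition F_level_bounded (q n : nat) (A : nat -> nat -> R) (b : nat -> R)
  (gamma delta mu : R) : Prop :=
  forall alpha : R, exists M : R, forall x : nat -> R,
    F_le q n A b gamma delta mu x alpha -> norm2 n x <= M.

(* Main.v *)
Require Import Defs.
From Stdlib Require Import Reals Lra Lia Classical.
From Coquelicot Require Import Coquelicot.
Open Scope R_scope.

Lemma rsum_ext f g n : (forall i, (i < n)%nat -> f i = g i) -> rsum f n = rsum g n.
Proof. induction n; simpl; intros H; [reflexivity|]. rewrite IHn by (intros; apply H; lia). rewrite H by lia. reflexivity. Qed.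

Lemma rsum_le f g n : (forall i, (i < n)%nat -> f i <= g i) -> rsum f n <= rsum g n.
Proof. induction n; simpl; intros H; [lra|]. assert (f n <= g n) by (apply H; lia). assert (rsum f n <= rsum g n) by (apply IHn; intros; apply H; lia). lra. Qed.

Lemma rsum_nonneg f n : (forall i, (i < n)%nat -> 0 <= f i) -> 0 <= rsum f n.
Proof. intros H. replace 0 with (rsum (fun _ => 0) n). apply rsum_le; auto.
 induction n; simpl; auto. rewrite IHn; [lra|intros; apply H; lia]. Qed.

Lemma rsum_zero n : rsum (fun _ => 0) n = 0.
Proof. induction n; simpl; auto. rewrite IHn; lra. Qed.

Lemma rsum_ge_term f n j : (forall i, (i < n)%nat -> 0 <= f i) -> (j < n)%nat -> f j <= rsum f n.
Proof. induction n; simpl; intros H Hj; [lia|].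
 assert (0 <= rsum f n) by (apply rsum_nonneg; intros; apply H; lia).
 assert (0 <= f n) by (apply H; lia).
 destruct (Nat.eq_dec j n). subst; lra. assert (f j <= rsum f n) by (apply IHn; [intros; apply H; lia| lia]). lra. Qed.

Lemma rsum_abs f n : Rabs (rsum f n) <= rsum (fun i => Rabs (f i)) n.
Proof. induction n; simpl. rewrite Rabs_R0; lra. eapply Rle_trans. apply Rabs_triang. lra. Qed.

Lemma rsum_scal c f n : rsum (fun i => c * f i) n = c * rsum f n.
Proof. induction n; simpl. lra. rewrite IHn; lra. Qed.

Definition del (j : nat) (f : nat -> R) := fun k => if Nat.eqb k j then 0 else f k.

Lemma rsum_del f n j : (j < n)%nat -> rsum f n = rsum (del j f) n + f j.
Proof. induction n; simpl; intros Hj; [lia|]. unfold del at 2.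
 destruct (Nat.eq_dec j n).
 - subst. rewrite Nat.eqb_refl. rewrite (rsum_ext (del n f) f). lra.
   intros i Hi. unfold del. destruct (Nat.eqb_spec i n); [lia|auto].
 - destruct (Nat.eqb_spec n j); [lia|]. rewrite IHn by lia. lra. Qed.

Lemma matvec_shift n A x i j t : (j < n)%nat ->
  matvec n A (shift x j t) i = matvec n A x i + A i j * t.
Proof. intros Hj. unfold matvec. rewrite (rsum_del _ n j Hj). rewrite (rsum_del (fun k => A i k * x k) n j Hj).
 rewrite (rsum_ext (del j (fun k => A i k * shift x j t k)) (del j (fun k => A i k * x k))).
 unfold shift. rewrite Nat.eqb_refl. lra.
 intros k Hk. unfold del, shift. destruct (Nat.eqb k j); auto. Qed.

Lemma maximizer (x : nat -> R) n : (0 < n)%nat -> exists j, (j < n)%nat /\ forall k, (k < n)%nat -> Rabs (x k) <= Rabs (x j).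
Proof. induction n; intros H; [lia|]. destruct n.
 - exists 0%nat; split; [lia|]. intros k Hk; replace k with 0%nat by lia; lra.
 - destruct IHn as [j [Hj Hm]]; [lia|].
   destruct (Rle_dec (Rabs (x j)) (Rabs (x (S n)))).
   + exists (S n); split; [lia|]. intros k Hk. destruct (Nat.eq_dec k (S n)). subst; lra.
     specialize (Hm k ltac:(lia)); lra.
   + exists j; split; [lia|]. intros k Hk. destruct (Nat.eq_dec k (S n)). subst; lra.
     apply Hm; lia. Qed.

Lemma cmin q n (A : nat -> nat -> R) : (forall j, (j < n)%nat -> exists i, (i < q)%nat /\ A i j <> 0) ->
  exists c, 0 < c /\ forall j, (j < n)%nat -> exists i, (i < q)%nat /\ c <= Rabs (A i j).
Proof. induction n; intros H.
 - exists 1; split; [lra|]. intros; lia.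
 - destruct IHn as [c [Hc Hm]]. intros; apply H; lia.
   destruct (H n ltac:(lia)) as [i [Hi Ha]].
   exists (Rmin c (Rabs (A i n))). split. apply Rmin_glb_lt; auto. apply Rabs_pos_lt; auto.
   intros j Hj. destruct (Nat.eq_dec j n). subst. exists i; split; auto. apply Rmin_r.
   destruct (Hm j ltac:(lia)) as [i' [Hi' Hc']]. exists i'; split; auto.
   eapply Rle_trans; [apply Rmin_l|auto]. Qed.

Lemma sq_le n (x : nat -> R) : rsum (fun k => x k ^ 2) n <= (rsum (fun k => Rabs (x k)) n) ^ 2.
Proof. induction n; simpl. lra.
 assert (0 <= rsum (fun k => Rabs (x k)) n) by (apply rsum_nonneg; intros; apply Rabs_pos).
 pose proof (Rabs_pos (x n)). pose proof (pow2_abs (x n)). simpl in *. nra. Qed.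

Lemma norm2_le_norm1 n x : norm2 n x <= norm1 n x.
Proof. unfold norm2, norm1. rewrite <- (sqrt_pow2 (rsum (fun j => Rabs (x j)) n)).
 apply sqrt_le_1_alt, sq_le. apply rsum_nonneg; intros; apply Rabs_pos. Qed.
Lemma rsum_derive (f : nat -> R -> R) d t q : (forall i, (i < q)%nat -> is_derive (f i) t (d i)) ->
  is_derive (fun s => rsum (fun i => f i s) q) t (rsum d q).
Proof. induction q; intros H; simpl. apply (is_derive_const (V:=R_NormedModule) 0 t).
 apply (is_derive_plus (fun s => rsum (fun i => f i s) q) (f q)). apply IHq; intros; apply H; lia. apply H; lia. Qed.

Lemma term_derive r a g : 0 < g -> is_derive (fun t => ln (1 + (r + a*t)^2 / g^2)) 0 (2*r/(g^2+r^2) * a).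
Proof. intros Hg. auto_derive.
 - replace (r + a * 0) with r by ring. assert (0 < / (g*(g*1))) by (apply Rinv_0_lt_compat; nra). nra.
 - replace (r + a * 0) with r by ring. field. split; [nra|lra]. Qed.

Theorem mainTheorem17 (q n : nat) (A : nat -> nat -> R) (b : nat -> R)
  (gamma delta mu : R) :
  0 <= mu <= 1 ->
  full_row_rank q n A ->
  0 < gamma ->
  0 < delta < lorentz q gamma b ->
  (* (i) MFCQ at every feasible point with active constraint *)
  (forall x : nat -> R,
     gfun q n A b gamma delta x <= 0 ->
     gfun q n A b gamma delta x = 0 ->
     exists grad : nat -> R,
       is_gradient n (gfun q n A b gamma delta) x grad /\
       exists j, (j < n)%nat /\ grad j <> 0)
  /\
  (* (ii) mu in [0,1) => F level-bounded *)
  (mu < 1 -> F_level_bounded q n A b gamma delta mu)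
  /\
  (* (iii) mu = 1 and A has no zero columns => F level-bounded *)
  (mu = 1 ->
   (forall j, (j < n)%nat -> exists i, (i < q)%nat /\ A i j <> 0) ->
   F_level_bounded q n A b gamma delta mu).
Proof.
  intros Hmu Hrank Hg Hd.
  assert (Hg2 : 0 < gamma ^ 2) by nra.
  split; [|split].
  - intros x _ Hg0.
    set (r := fun i => matvec n A x i - b i).
    set (w := fun i => 2 * r i / (gamma ^ 2 + r i ^ 2)).
    exists (fun j => rsum (fun i => w i * A i j) q). split.
    + intros j Hj. apply is_derive_Reals. unfold gfun, lorentz.
      apply (is_derive_ext (fun t => rsum (fun i => ln (1 + (r i + A i j * t)^2/gamma^2)) q - delta)).
      { intros t. f_equal. apply rsum_ext. intros i Hi. rewrite matvec_shift by auto. unfold r.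
        f_equal; f_equal; f_equal; ring. }
      replace (rsum (fun i => w i * A i j) q) with (rsum (fun i => w i * A i j) q - 0) by ring.
      apply (is_derive_minus (V:=R_NormedModule) (fun t => rsum (fun i => ln (1 + (r i + A i j * t)^2/gamma^2)) q) (fun _ => delta)).
      * apply (rsum_derive (fun i t => ln (1 + (r i + A i j * t)^2/gamma^2))).
        intros i Hi. apply term_derive; auto.
      * apply (is_derive_const (V:=R_NormedModule) delta 0).
    + apply NNPP; intros Hno.
      assert (Hz : forall j, (j < n)%nat -> rsum (fun i => w i * A i j) q = 0).
      { intros j Hj. destruct (Req_dec (rsum (fun i => w i * A i j) q) 0); auto.
        exfalso; apply Hno; exists j; auto. }
      pose proof (Hrank w Hz) as Hw.
      assert (Hr : forall i, (i < q)%nat -> r i = 0).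
      { intros i Hi. specialize (Hw i Hi). unfold w in Hw. unfold Rdiv in Hw.
        assert (0 < gamma ^ 2 + r i ^ 2) by nra.
        apply Rmult_integral in Hw. destruct Hw as [Hw|Hw]. lra.
        exfalso. apply (Rinv_neq_0_compat (gamma ^ 2 + r i ^ 2)); lra. }
      unfold gfun, lorentz in Hg0.
      rewrite (rsum_ext _ (fun _ => 0)) in Hg0. rewrite rsum_zero in Hg0. lra.
      intros i Hi. pose proof (Hr i Hi) as H0. unfold r in H0. rewrite H0.
      replace (1 + 0 ^ 2 / gamma ^ 2) with 1 by (field; lra). apply ln_1.
  - intros Hlt alpha. exists (alpha / (1 - mu)). intros x [_ H].
    pose proof (norm2_le_norm1 n x). assert (0 <= norm2 n x) by apply sqrt_pos.
    apply Rmult_le_reg_r with (1 - mu); [lra|]. unfold Rdiv. rewrite Rmult_assoc, Rinv_l by lra. nra.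
  - intros Hmu1 Hcol. subst mu. destruct (cmin q n A Hcol) as [c [Hc Hcm]].
    set (K := rsum (fun i => rsum (fun k => Rabs (A i k)) n) q).
    set (B := rsum (fun i => Rabs (b i)) q).
    set (R0 := 1 + gamma^2 * (exp delta - 1) + B).
    assert (HK : forall i k, (i < q)%nat -> (k < n)%nat -> Rabs (A i k) <= K).
    { intros i k Hi Hk. eapply Rle_trans.
      apply (rsum_ge_term (fun k => Rabs (A i k)) n k); auto. intros; apply Rabs_pos.
      apply (rsum_ge_term (fun i => rsum (fun k => Rabs (A i k)) n) q i); auto.
      intros; apply rsum_nonneg; intros; apply Rabs_pos. }
    assert (HK0 : 0 <= K) by (apply rsum_nonneg; intros; apply rsum_nonneg; intros; apply Rabs_pos).
    assert (HB0 : 0 <= B) by (apply rsum_nonneg; intros; apply Rabs_pos).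
    assert (He : 1 < exp delta). { pose proof (exp_ineq1 delta ltac:(lra)). lra. }
    assert (HR00 : 0 <= R0) by (unfold R0; nra).
    intros alpha. exists ((R0 + 2 * K * Rabs alpha) * / c + 3 * Rabs alpha).
    intros x [Hgx Hx].
    assert (HM0 : 0 <= (R0 + 2 * K * Rabs alpha) * / c).
    { apply Rmult_le_pos. pose proof (Rabs_pos alpha). nra. left; apply Rinv_0_lt_compat; auto. }
    pose proof (Rabs_pos alpha) as Ha0.
    assert (HR : forall i, (i < q)%nat -> Rabs (matvec n A x i) <= R0).
    { intros i Hi. set (ri := matvec n A x i - b i).
      assert (Hnn : forall y, 0 <= ln (1 + y ^ 2 / gamma ^ 2)).
      { intros y. rewrite <- ln_1. apply ln_le. lra.
        assert (0 <= y ^ 2 / gamma ^ 2) by (apply Rcomplements.Rdiv_le_0_compat; nra). lra. }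
      assert (Hl : ln (1 + ri ^ 2 / gamma ^ 2) <= delta).
      { unfold gfun, lorentz in Hgx.
        pose proof (rsum_ge_term (fun i => ln (1 + (matvec n A x i - b i) ^ 2 / gamma ^ 2)) q i
          ltac:(intros; apply Hnn) Hi). cbv beta in H. unfold ri. lra. }
      assert (Hl2 : 1 + ri ^ 2 / gamma ^ 2 <= exp delta).
      { destruct (Rle_dec (1 + ri ^ 2 / gamma ^ 2) (exp delta)) as [h|h]; auto.
        exfalso. assert (ln (exp delta) < ln (1 + ri ^ 2 / gamma ^ 2)).
        apply ln_increasing. apply exp_pos. lra. rewrite ln_exp in H. lra. }
      assert (Hr2 : ri ^ 2 <= gamma ^ 2 * (exp delta - 1)).
      { replace (ri ^ 2) with (gamma ^ 2 * (ri ^ 2 / gamma ^ 2)) by (field; lra). nra. }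
      assert (Hri : Rabs ri <= 1 + ri ^ 2). { pose proof (pow2_abs ri). pose proof (Rabs_pos ri). nra. }
      assert (Hbi : Rabs (b i) <= B).
      { apply (rsum_ge_term (fun i => Rabs (b i)) q i); auto. intros; apply Rabs_pos. }
      replace (matvec n A x i) with (ri + b i) by (unfold ri; ring).
      eapply Rle_trans. apply Rabs_triang. unfold R0. lra. }
    destruct n as [|n'].
    { unfold norm2. simpl. rewrite sqrt_0. lra. }
    destruct (maximizer x (S n') ltac:(lia)) as [j [Hj Hmax]].
    set (nn := S n') in *.
    set (m := Rabs (x j)). set (N := norm1 nn x). set (P := norm2 nn x).
    assert (HP2 : P ^ 2 = rsum (fun k => x k ^ 2) nn).
    { unfold P, norm2. apply pow2_sqrt. apply rsum_nonneg; intros. apply pow2_ge_0. }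
    assert (Hsum : rsum (fun k => x k ^ 2) nn <= m * N).
    { unfold N, norm1. rewrite <- rsum_scal. apply rsum_le. intros k Hk.
      pose proof (Hmax k Hk). pose proof (pow2_abs (x k)). pose proof (Rabs_pos (x k)). fold m in H. nra. }
    assert (HPN : P <= N) by apply norm2_le_norm1.
    assert (HP0 : 0 <= P) by apply sqrt_pos.
    assert (HmN : m <= N).
    { apply (rsum_ge_term (fun k => Rabs (x k)) nn j); auto. intros; apply Rabs_pos. }
    assert (Hm0 : 0 <= m) by apply Rabs_pos.
    fold N P in Hx.
    destruct (Rle_dec N alpha) as [hN|hN].
    { pose proof (Rle_abs alpha). lra. }
    assert (Hsq : (N - alpha) ^ 2 <= P ^ 2) by nra.
    assert (Hs : N - m <= 2 * alpha) by nra.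
    rewrite (Rabs_right alpha) in * by lra.
    destruct (Hcm j Hj) as [i [Hi Hci]].
    assert (Hdec : matvec nn A x i = rsum (del j (fun k => A i k * x k)) nn + A i j * x j).
    { unfold matvec. apply rsum_del; auto. }
    assert (Hdel : Rabs (rsum (del j (fun k => A i k * x k)) nn) <= K * (N - m)).
    { eapply Rle_trans. apply rsum_abs.
      assert (HNd : N = rsum (del j (fun k => Rabs (x k))) nn + m).
      { unfold N, norm1, m. apply (rsum_del (fun k => Rabs (x k))); auto. }
      replace (N - m) with (rsum (del j (fun k => Rabs (x k))) nn) by lra.
      rewrite <- rsum_scal. apply rsum_le. intros k Hk. unfold del.
      destruct (Nat.eqb k j). rewrite Rabs_R0; lra.
      rewrite Rabs_mult. apply Rmult_le_compat_r. apply Rabs_pos. apply HK; auto. }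
    assert (Hcm2 : c * m <= R0 + 2 * K * alpha).
    { assert (Hij : A i j * x j = matvec nn A x i - rsum (del j (fun k => A i k * x k)) nn) by lra.
      assert (Rabs (A i j * x j) <= R0 + K * (N - m)).
      { rewrite Hij. unfold Rminus. eapply Rle_trans. apply Rabs_triang. rewrite Rabs_Ropp.
        pose proof (HR i Hi). lra. }
      rewrite Rabs_mult in H. fold m in H.
      assert (c * m <= Rabs (A i j) * m) by (apply Rmult_le_compat_r; auto).
      assert (K * (N - m) <= K * (2 * alpha)) by (apply Rmult_le_compat_l; auto). lra. }
    assert (Hmb : m <= (R0 + 2 * K * alpha) * / c).
    { apply Rmult_le_reg_r with c; auto. rewrite Rmult_assoc, Rinv_l by lra. lra. }
    lra.
Qed.
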